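(* Let $G$ be a connected graph on $n\ge 12$ vertices with $\gamma(G)\neq 2$. Then the parameters $dv(G,k_1,k_2,k_3)$ for all nonnegative integers $k_1,k_2,k_3$ with $0\le k_1+k_2+k_3\le n-3$, and $dv(G,k_1,k,k)$ for all nonnegative integers $k_1,k$ with $0\le k_1+2k\le n-3$, are reconstructible; that is, for every graph $H$ with $\mathscr{D}(H)=\mathscr{D}(G)$ these parameters take the same values on $H$ as on $G$.
   Context: All graphs are finite, simple and undirected; $\gamma(G)$ is the domination number. For a vertex $v$, the card $G-v$ is the unlabeled graph obtained by deleting $v$; the deck $\mathscr{D}(G)$ is the multiset of all cards. For nonnegative integers $k_1,k_2,k_3$, $dv(G,k_1,k_2,k_3)$ denotes the number of pairs of non-adjacent vertices $x$ and $y$ in $G$ such that exactly $k_1$ vertices are adjacent to both $x$ and $y$, exactly $k_2$ vertices are adjacent to $x$ but not to $y$, and exactly $k_3$ vertices are adjacent to $y$ but not to $x$. *)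

(* Defs.v *)
From mathcomp Require Import all_boot.
Set Implicit Arguments. Unset Strict Implicit. Unset Printing Implicit Defensive.

Definition simple_graph (n : nat) (g : rel 'I_n) : Prop :=
  irreflexive g /\ symmetric g.

Definition connected_graph (n : nat) (g : rel 'I_n) : Prop :=
  forall x y : 'I_n, connect g x y.

Definition dominating (n : nat) (g : rel 'I_n) (D : {set 'I_n}) : bool :=
  [forall v, (v \in D) || [exists u in D, g u v]].

(* domination number: minimum size of a dominating set (setT dominates, so
   the default n is attained). *)
Definition domination_number (n : nat) (g : rel 'I_n) : nat :=
  \big[minn/n]_(D : {set 'I_n} | dominating g D) #|D|.

(* The card G - v, viewed as the induced graph on the vertices other than v. *)
Definition card_vertices (n : nat) (v : 'I_n) := {x : 'I_n | x != v}.

Definition cards_iso (n : nat) (g h : rel 'I_n) (v w : 'I_n) : Prop :=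
  exists f : card_vertices v -> card_vertices w,
    bijective f /\
    forall a b : card_vertices v, g (val a) (val b) = h (val (f a)) (val (f b)).

(* Equal decks: the multisets of unlabeled cards coincide, i.e. there is a
   bijection of the vertices matching each card with an isomorphic one. *)
Definition same_deck (n : nat) (g h : rel 'I_n) : Prop :=
  exists s : 'I_n -> 'I_n, bijective s /\ forall v, cards_iso g h v (s v).

Definition dv_pair (n : nat) (g : rel 'I_n) (k1 k2 k3 : nat) (x y : 'I_n) : bool :=
  [&& #|[set z | g x z && g y z]| == k1,
      #|[set z | g x z && ~~ g y z]| == k2 &
      #|[set z | g y z && ~~ g x z]| == k3].

Definition dv (n : nat) (g : rel 'I_n) (k1 k2 k3 : nat) : nat :=
  #|[set P : {set 'I_n} | [exists x, exists y,
        [&& P == [set x; y], x != y, ~~ g x y &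
            dv_pair g k1 k2 k3 x y || dv_pair g k1 k3 k2 x y]]]|.

(* Main.v *)
Require Import Defs.
From mathcomp Require Import all_boot.
From mathcomp Require Import zify.
Set Implicit Arguments. Unset Strict Implicit. Unset Printing Implicit Defensive.

Section Gen.
Variable T : finType.
Definition cC (r : rel T) (W : {set T}) x y := #|[set z in W | r x z && r y z]|.
Definition cA (r : rel T) (W : {set T}) x y := #|[set z in W | r x z && ~~ r y z]|.
Definition prof r W x y := (cC r W x y, cA r W x y, cA r W y x).
Definition valid (r : rel T) (W : {set T}) (u : T * T) :=
  [&& u.1 \in W, u.2 \in W, u.1 != u.2 & ~~ r u.1 u.2].
Definition PW r W (phi : nat * nat * nat -> bool) :=
  #|[set u : T * T | valid r W u && phi (prof r W u.1 u.2)]|.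
Definition EW (r : rel T) (W : {set T}) := \sum_(x in W) #|[set z in W | r x z]|.
End Gen.

Lemma imset_sep (T U : finType) (e : T -> U) (W : {set T}) (P : pred U) :
  [set z in e @: W | P z] = e @: [set z in W | P (e z)].
Proof.
apply/setP=> z; rewrite !inE; apply/andP/imsetP.
- by case=> /imsetP [a aW ->] Pa; exists a; rewrite // inE aW.
- by case=> a; rewrite inE => /andP [aW Pa] ->; rewrite imset_f.
Qed.

Section Iso.
Variables (T U : finType) (e : T -> U) (r : rel T) (r' : rel U).
Hypothesis ie : injective e.
Hypothesis Hr : forall a b, r a b = r' (e a) (e b).

Lemma cC_iso (W : {set T}) x y : cC r' (e @: W) (e x) (e y) = cC r W x y.
Proof. by rewrite /cC imset_sep card_imset //; apply: eq_card => z; rewrite !inE -!Hr. Qed.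
Lemma cA_iso (W : {set T}) x y : cA r' (e @: W) (e x) (e y) = cA r W x y.
Proof. by rewrite /cA imset_sep card_imset //; apply: eq_card => z; rewrite !inE -!Hr. Qed.
Lemma prof_iso (W : {set T}) x y : prof r' (e @: W) (e x) (e y) = prof r W x y.
Proof. by rewrite /prof cC_iso !cA_iso. Qed.

Lemma PW_iso (W : {set T}) phi : PW r' (e @: W) phi = PW r W phi.
Proof.
rewrite /PW.
have -> : [set u | valid r' (e @: W) u && phi (prof r' (e @: W) u.1 u.2)] =
  (fun u => (e u.1, e u.2)) @: [set u | valid r W u && phi (prof r W u.1 u.2)].
  apply/setP => [[a' b']]; rewrite !inE /valid /=; apply/idP/imsetP.
  - case/andP => /and4P [/imsetP [a aW ->] /imsetP [b bW ->] neq nadj] ph.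
    exists (a, b) => //; rewrite inE /valid /= aW bW -prof_iso ph.
    by rewrite (inj_eq ie) in neq; rewrite neq Hr nadj.
  - case => [[a b]]; rewrite inE /valid /= => /andP [/and4P[aW bW neq nadj] ph] [-> ->].
    by rewrite /valid /= !imset_f // (inj_eq ie) neq -Hr nadj prof_iso ph.
rewrite card_imset //.
by move=> [a b] [c d] /= [/ie -> /ie ->].
Qed.

Lemma EW_iso (W : {set T}) : EW r' (e @: W) = EW r W.
Proof.
rewrite /EW big_imset /=; last by move=> a b _ _; apply: ie.
apply: eq_bigr => x _; rewrite imset_sep card_imset //.
by apply: eq_card => z; rewrite !inE -Hr.
Qed.
End Iso.

Definition rv n (g : rel 'I_n) (v : 'I_n) : rel (card_vertices v) :=
  fun a b => g (val a) (val b).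

Lemma val_setT n (v : 'I_n) : [set val x | x in [set: card_vertices v]] = [set~ v].
Proof.
apply/setP => z; rewrite !inE; apply/imsetP/idP.
- by case=> a _ ->; exact: (valP a).
- by move=> zv; exists (exist _ z zv).
Qed.

Lemma PW_card n (g : rel 'I_n) v phi : PW g [set~ v] phi = PW (@rv _ g v) setT phi.
Proof. by rewrite -val_setT (PW_iso (r:=@rv _ g v) (r':=g) val_inj). Qed.
Lemma EW_card n (g : rel 'I_n) v : EW g [set~ v] = EW (@rv _ g v) setT.
Proof. by rewrite -val_setT (EW_iso (r:=@rv _ g v) (r':=g) val_inj). Qed.

Lemma bij_setT (T U : finType) (f : T -> U) : bijective f -> f @: setT = setT.
Proof.
case=> fi K1 K2; apply/setP => z; rewrite inE; apply/imsetP.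
by exists (fi z); rewrite ?inE ?K2.
Qed.

Lemma cards_iso_PW n (g h : rel 'I_n) v w : cards_iso g h v w ->
  forall phi, PW g [set~ v] phi = PW h [set~ w] phi.
Proof.
case=> f [bf Hf] phi; rewrite !PW_card -(bij_setT bf).
by rewrite (PW_iso (e:=f) (r:= @rv _ g v) (r' := @rv _ h w) (bij_inj bf)).
Qed.

Lemma cards_iso_EW n (g h : rel 'I_n) v w : cards_iso g h v w ->
  EW g [set~ v] = EW h [set~ w].
Proof.
case=> f [bf Hf]; rewrite !EW_card -(bij_setT bf).
by rewrite (EW_iso (e:=f) (r:= @rv _ g v) (r' := @rv _ h w) (bij_inj bf)).
Qed.

Lemma kelly_PW n (g h : rel 'I_n) : same_deck g h -> forall phi,
  \sum_v PW g [set~ v] phi = \sum_v PW h [set~ v] phi.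
Proof.
case=> s [bs Hs] phi; rewrite [RHS](reindex_inj (bij_inj bs)).
by apply: eq_bigr => v _; exact: cards_iso_PW (Hs v) phi.
Qed.

Lemma kelly_EW n (g h : rel 'I_n) : same_deck g h ->
  \sum_v EW g [set~ v] = \sum_v EW h [set~ v].
Proof.
case=> s [bs Hs]; rewrite [RHS](reindex_inj (bij_inj bs)).
by apply: eq_bigr => v _; exact: cards_iso_EW (Hs v).
Qed.

Lemma sum_ind (T : finType) (A : {set T}) : \sum_v (v \in A : nat) = #|A|.
Proof. by rewrite -sum1_card [RHS]big_mkcond /=; apply: eq_bigr => v _; case: (v \in A). Qed.

Lemma cardsD1' (T : finType) (A : {set T}) v : #|A :\ v| = #|A| - (v \in A).
Proof. by rewrite (cardsD1 v A) addKn. Qed.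

Lemma part_card (T : finType) (x y : T) (C A B : {set T}) :
  x != y ->
  (forall v, v \in C -> [&& v != x, v != y, v \notin A & v \notin B]) ->
  (forall v, v \in A -> [&& v != x, v != y & v \notin B]) ->
  (forall v, v \in B -> (v != x) && (v != y)) ->
  #|T| = 2 + #|C| + #|A| + #|B|
         + #|[set v | [&& v != x, v != y, v \notin C, v \notin A & v \notin B]]|.
Proof.
move=> xy HC HA HB.
set R := [set v | [&& v != x, v != y, v \notin C, v \notin A & v \notin B]].
have E : forall v, 1 = (v \in [set x]) + (v \in [set y]) + (v \in C) + (v \in A)
                      + (v \in B) + (v \in R).
  move=> v; rewrite !inE.
  case: (boolP (v \in C)) => [/HC /and4P[/negbTE -> /negbTE -> /negbTE -> /negbTE ->] //|vC].
  case: (boolP (v \in A)) => [/HA /and3P[/negbTE -> /negbTE -> /negbTE ->] //|vA].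
  case: (boolP (v \in B)) => [/HB /andP[/negbTE -> /negbTE ->] //|vB].
  case: (eqVneq v x) => [->|vx]; first by rewrite (negbTE xy).
  by case: (eqVneq v y).
have -> : #|T| = \sum_(v : T) 1 by rewrite sum1_card.
by rewrite (eq_bigr _ (fun v _ => E v)) !big_split /= !sum_ind !cards1.
Qed.

Lemma sum_remove (T : finType) (x y : T) (C A B : {set T})
    (Phi : nat -> nat -> nat -> nat) :
  x != y ->
  (forall v, v \in C -> [&& v != x, v != y, v \notin A & v \notin B]) ->
  (forall v, v \in A -> [&& v != x, v != y & v \notin B]) ->
  (forall v, v \in B -> (v != x) && (v != y)) ->
  \sum_(v | (v != x) && (v != y)) Phi #|C :\ v| #|A :\ v| #|B :\ v| =
  #|C| * Phi #|C|.-1 #|A| #|B| + #|A| * Phi #|C| #|A|.-1 #|B|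
  + #|B| * Phi #|C| #|A| #|B|.-1
  + (#|T| - 2 - #|C| - #|A| - #|B|) * Phi #|C| #|A| #|B|.
Proof.
move=> xy HC HA HB.
set R := [set v | [&& v != x, v != y, v \notin C, v \notin A & v \notin B]].
have cardR : #|T| = 2 + #|C| + #|A| + #|B| + #|R| by exact: part_card.
rewrite big_mkcond /=.
have E : forall v, (if (v != x) && (v != y) then Phi #|C :\ v| #|A :\ v| #|B :\ v| else 0)
   = (v \in C) * Phi #|C|.-1 #|A| #|B| + (v \in A) * Phi #|C| #|A|.-1 #|B|
     + (v \in B) * Phi #|C| #|A| #|B|.-1 + (v \in R) * Phi #|C| #|A| #|B|.
  move=> v; rewrite !cardsD1' inE.
  case: (boolP (v \in C)) => [vC|vC].
    by move: (HC v vC) => /and4P[-> -> /negbTE -> /negbTE ->]; rewrite /= subn1 !subn0 !mul0n !addn0 mul1n.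
  case: (boolP (v \in A)) => [vA|vA].
    by move: (HA v vA) => /and3P[-> -> /negbTE ->]; rewrite /= subn1 !subn0 !mul0n !addn0 add0n mul1n.
  case: (boolP (v \in B)) => [vB|vB].
    by move: (HB v vB) => /andP[-> ->]; rewrite /= subn1 !subn0 !mul0n !addn0 !add0n mul1n.
  rewrite !subn0 !mul0n !add0n /=.
  by rewrite andbT; case: ((v != x) && (v != y)); rewrite ?mul1n ?mul0n.
rewrite (eq_bigr _ (fun v _ => E v)) !big_split /= -!big_distrl /= !sum_ind.
congr (_ + _); congr (_ * _); rewrite cardR; lia.
Qed.

Definition psi n (phi : nat * nat * nat -> bool) (p : nat * nat * nat) : nat :=
  p.1.1 * phi (p.1.1.-1, p.1.2, p.2) + p.1.2 * phi (p.1.1, p.1.2.-1, p.2)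
  + p.2 * phi (p.1.1, p.1.2, p.2.-1) + (n - 2 - p.1.1 - p.1.2 - p.2) * phi p.

Lemma PW_sum (T : finType) (r : rel T) W phi :
  PW r W phi = \sum_u (valid r W u && phi (prof r W u.1 u.2) : nat).
Proof. by rewrite /PW -sum_ind; apply: eq_bigr => u _; rewrite inE. Qed.

Lemma sep_setC1 (T : finType) (P : pred T) v :
  [set z in [set~ v] | P z] = [set z in setT | P z] :\ v.
Proof. by apply/setP => z; rewrite !inE. Qed.

Lemma kelly_expand n (g : rel 'I_n) phi : simple_graph g ->
  \sum_v PW g [set~ v] phi = \sum_u valid g setT u * psi n phi (prof g setT u.1 u.2).
Proof.
case=> irr sym.
rewrite (eq_bigr _ (fun v _ => PW_sum g [set~ v] phi)) exchange_big /=.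
apply: eq_bigr => [[x y]] _.
rewrite /valid /= !inE /=.
case xy: (x != y); last first.
  by rewrite mul0n big1 // => v _; rewrite !andbF.
case gxy: (g x y).
  by rewrite mul0n big1 // => v _; rewrite !andbF.
rewrite /= mul1n.
transitivity (\sum_(v | (v != x) && (v != y)) (phi (prof g [set~ v] x y) : nat)).
  rewrite [RHS]big_mkcond; apply: eq_bigr => v _; rewrite !inE ![_ == v]eq_sym /= !andbT.
  by case: ((v != x) && (v != y)).
pose C := [set z in setT | g x z && g y z].
pose A := [set z in setT | g x z && ~~ g y z].
pose B := [set z in setT | g y z && ~~ g x z].
have Hprof : forall v, prof g [set~ v] x y = (#|C :\ v|, #|A :\ v|, #|B :\ v|).
  by move=> v; rewrite /prof /cC /cA !sep_setC1.
under eq_bigr => v _ do rewrite Hprof.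
have -> : prof g setT x y = (#|C|, #|A|, #|B|) by [].
have HC : forall v, v \in C -> [&& v != x, v != y, v \notin A & v \notin B].
  move=> v; rewrite !inE /= => /andP[gxv gyv]; rewrite gxv gyv /= andbT.
  apply/andP; split.
    by apply: contraTneq gxv => ->; rewrite irr.
  by apply: contraTneq gyv => ->; rewrite irr.
have HA : forall v, v \in A -> [&& v != x, v != y & v \notin B].
  move=> v; rewrite !inE /= => /andP[gxv gyv]; rewrite gxv /= andbF andbT.
  apply/andP; split.
    by apply: contraTneq gxv => ->; rewrite irr.
  by apply: contraTneq gxv => ->; rewrite gxy.
have HB : forall v, v \in B -> (v != x) && (v != y).
  move=> v; rewrite !inE /= => /andP[gyv gxv].
  apply/andP; split.
    by apply: contraTneq gyv => ->; rewrite sym gxy.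
  by apply: contraTneq gyv => ->; rewrite irr.
have := @sum_remove _ x y C A B (fun c a b => nat_of_bool (phi (c, a, b))) xy HC HA HB.
move=> /= ->.
by rewrite /psi /= card_ord.
Qed.

Lemma ind1 (c a b p1 p2 p3 : nat) :
  c * ((c.-1, a, b) == (p1, p2, p3)) = p1.+1 * ((c, a, b) == (p1.+1, p2, p3)).
Proof.
rewrite !xpair_eqE; case: c => [|c] /=; first by rewrite mul0n muln0.
by rewrite eqSS; case: eqP => [->|] //=; rewrite !muln0.
Qed.
Lemma ind2 (c a b p1 p2 p3 : nat) :
  a * ((c, a.-1, b) == (p1, p2, p3)) = p2.+1 * ((c, a, b) == (p1, p2.+1, p3)).
Proof.
rewrite !xpair_eqE; case: a => [|a] /=; first by rewrite mul0n andbF muln0.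
rewrite eqSS; case: (c == p1); case: (b == p3); rewrite /= ?andbF ?muln0 //.
by case: eqP => [->|]; rewrite ?muln0.
Qed.
Lemma ind3 (c a b p1 p2 p3 : nat) :
  b * ((c, a, b.-1) == (p1, p2, p3)) = p3.+1 * ((c, a, b) == (p1, p2, p3.+1)).
Proof.
rewrite !xpair_eqE; case: b => [|b] /=; first by rewrite mul0n andbF muln0.
rewrite eqSS; case: (c == p1); case: (a == p2); rewrite /= ?andbF ?muln0 //.
by case: eqP => [->|]; rewrite ?muln0.
Qed.
Lemma ind0 n (c a b p1 p2 p3 : nat) :
  (n - 2 - c - a - b) * ((c, a, b) == (p1, p2, p3)) =
  (n - 2 - p1 - p2 - p3) * ((c, a, b) == (p1, p2, p3)).
Proof. by case: eqP => [[-> -> ->]|]; rewrite ?muln0. Qed.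

Lemma kelly_O n (g : rel 'I_n) p1 p2 p3 : simple_graph g ->
  \sum_v PW g [set~ v] (pred1 (p1, p2, p3)) =
  p1.+1 * PW g setT (pred1 (p1.+1, p2, p3)) + p2.+1 * PW g setT (pred1 (p1, p2.+1, p3))
  + p3.+1 * PW g setT (pred1 (p1, p2, p3.+1))
  + (n - 2 - p1 - p2 - p3) * PW g setT (pred1 (p1, p2, p3)).
Proof.
move=> sg; rewrite kelly_expand // !PW_sum !big_distrr -!big_split.
apply: eq_bigr => u _ /=.
case: (prof g setT u.1 u.2) => [[c a] b].
case: (valid g setT u); rewrite ?mul0n ?muln0 //= mul1n.
by rewrite /psi /= ind1 ind2 ind3 ind0.
Qed.

Definition tot s (q : nat * nat * nat) := q.1.1 + q.1.2 + q.2 == s.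

Lemma kelly_A n (g : rel 'I_n) s : simple_graph g ->
  \sum_v PW g [set~ v] (tot s) =
  s.+1 * PW g setT (tot s.+1) + (n - 2 - s) * PW g setT (tot s).
Proof.
move=> sg; rewrite kelly_expand // !PW_sum !big_distrr -!big_split.
apply: eq_bigr => u _ /=.
case: (prof g setT u.1 u.2) => [[c a] b].
case: (valid g setT u); rewrite ?mul0n ?muln0 //= mul1n.
rewrite /psi /tot /=.
have E1 : c * (c.-1 + a + b == s) = c * (c + a + b == s.+1).
  by case: c => [|c] //=; rewrite !addSn eqSS.
have E2 : a * (c + a.-1 + b == s) = a * (c + a + b == s.+1).
  by clear E1; case: a => [|a] //=; rewrite addnS addSn eqSS.
have E3 : b * (c + a + b.-1 == s) = b * (c + a + b == s.+1).
  by clear E1 E2; case: b => [|b] //=; rewrite addnS eqSS.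
rewrite E1 E2 E3 -!mulnDl.
congr (_ + _).
  case: (c + a + b =P s.+1) => [E|_]; last by rewrite !muln0.
  by rewrite E.
case: (c + a + b =P s) => [E|_]; last by rewrite !muln0.
clear E1 E2 E3; by have -> : n - 2 - c - a - b = n - 2 - s by lia.
Qed.

Definition deg (T : finType) (r : rel T) x := #|[set z | r x z]|.

Lemma EW_split n (g : rel 'I_n) v : simple_graph g ->
  EW g setT = EW g [set~ v] + 2 * deg g v.
Proof.
case=> irr sym.
rewrite /EW (bigD1 v) ?inE //=.
have -> : #|[set z in setT | g v z]| = deg g v by apply: eq_card => z; rewrite !inE.
rewrite [in RHS](eq_bigl (fun x => x != v)); last by move=> x /=; rewrite !inE.
rewrite [in LHS](eq_bigl (fun x => x != v)); last by move=> x /=; rewrite !inE.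
have E : forall x, #|[set z in setT | g x z]| = g x v + #|[set z in [set~ v] | g x z]|.
  by move=> x; rewrite sep_setC1 (cardsD1 v) !inE.
rewrite (eq_bigr _ (fun x _ => E x)) big_split /=.
have -> : \sum_(x | x != v) (g x v : nat) = deg g v.
  rewrite /deg -sum_ind [RHS](bigD1 v) //= inE irr add0n.
  by apply: eq_bigr => x _; rewrite inE sym.
lia.
Qed.

Lemma EW_deg n (g : rel 'I_n) : EW g setT = \sum_v deg g v.
Proof.
rewrite /EW; apply: eq_big => [x|x _]; first by rewrite inE.
by apply: eq_card => z; rewrite !inE.
Qed.

Lemma EW_total n (g : rel 'I_n) : simple_graph g ->
  n * EW g setT = \sum_v EW g [set~ v] + 2 * EW g setT.
Proof.
move=> sg.
have -> : n * EW g setT = \sum_(v : 'I_n) EW g setT by rewrite sum_nat_const card_ord.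
rewrite [in X in _ = _ + X]EW_deg big_distrr -big_split /=.
by apply: eq_bigr => v _; apply: EW_split.
Qed.

Lemma deg_match n (g h : rel 'I_n) (s : 'I_n -> 'I_n) :
  3 <= n -> simple_graph g -> simple_graph h -> bijective s ->
  (forall v, cards_iso g h v (s v)) ->
  forall v, deg g v = deg h (s v).
Proof.
move=> n3 sg sh bs Hs.
have K : \sum_v EW g [set~ v] = \sum_v EW h [set~ v].
  by apply: kelly_EW; exists s.
have Eeq : EW g setT = EW h setT.
  have Hg := EW_total sg; have Hh := EW_total sh.
  rewrite K in Hg.
  apply/eqP; rewrite -(@eqn_pmul2l (n - 2)); last by lia.
  rewrite !mulnBl; apply/eqP.
  move: Hg Hh; set Kh := \sum_v _; set Eg := EW g setT; set Eh := EW h setT.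
  move: (n * Eg) (n * Eh) => nEg nEh. lia.
move=> v.
have := EW_split v sg; have := EW_split (s v) sh.
rewrite -(cards_iso_EW (Hs v)) Eeq. lia.
Qed.

Lemma pair_hyps n (g : rel 'I_n) x y : simple_graph g -> g x y = false ->
  let C := [set z in setT | g x z && g y z] in
  let A := [set z in setT | g x z && ~~ g y z] in
  let B := [set z in setT | g y z && ~~ g x z] in
  [/\ (forall v, v \in C -> [&& v != x, v != y, v \notin A & v \notin B]),
      (forall v, v \in A -> [&& v != x, v != y & v \notin B]) &
      (forall v, v \in B -> (v != x) && (v != y))].
Proof.
case=> irr sym gxy C A B; split.
- move=> v; rewrite !inE /= => /andP[gxv gyv]; rewrite gxv gyv /= andbT.
  apply/andP; split.
    by apply: contraTneq gxv => ->; rewrite irr.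
  by apply: contraTneq gyv => ->; rewrite irr.
- move=> v; rewrite !inE /= => /andP[gxv gyv]; rewrite gxv /= andbF andbT.
  apply/andP; split.
    by apply: contraTneq gxv => ->; rewrite irr.
  by apply: contraTneq gxv => ->; rewrite gxy.
- move=> v; rewrite !inE /= => /andP[gyv gxv].
  apply/andP; split.
    by apply: contraTneq gyv => ->; rewrite sym gxy.
  by apply: contraTneq gyv => ->; rewrite irr.
Qed.

Lemma conn_deg n (g : rel 'I_n) : 2 <= n -> connected_graph g ->
  forall v, 0 < deg g v.
Proof.
move=> n2 cg v.
have : 0 < #|[set~ v]| by rewrite cardsC1 card_ord; lia.
case/card_gt0P => z; rewrite !inE => zv.
move/connectP: (cg v z) => [[|a p]] /=; first by move=> _ E; move: zv; rewrite E /= eqxx.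
case/andP => gva _ _; apply/card_gt0P; exists a; by rewrite inE.
Qed.

Lemma A0 n (g : rel 'I_n) : (forall v, 0 < deg g v) -> PW g setT (tot 0) = 0.
Proof.
move=> Hd; rewrite PW_sum big1 // => [[x y]] _.
rewrite /valid /tot /prof /=.
case: (boolP (~~ g x y)); last by rewrite !andbF.
move=> nxy.
have [z gxz] : exists z, g x z.
  by move/card_gt0P: (Hd x) => [z]; rewrite inE => ?; exists z.
have : 0 < cC g setT x y + cA g setT x y.
  case gyz: (g y z).
    suff : 0 < cC g setT x y by lia.
    by apply/card_gt0P; exists z; rewrite !inE gxz gyz.
  suff : 0 < cA g setT x y by lia.
  by apply/card_gt0P; exists z; rewrite !inE gxz gyz.
move=> H; rewrite [_ + _ + _ == 0](_ : _ = false) ?andbF //; apply/eqP; lia.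
Qed.

Lemma PW_univ n (g : rel 'I_n) u phi : simple_graph g ->
  (forall z, z != u -> g u z) ->
  PW g setT phi = PW g [set~ u] (fun q => phi (q.1.1.+1, q.1.2, q.2)).
Proof.
case=> irr sym Hu; rewrite /PW; apply: eq_card => [[x y]]; rewrite !inE /valid /= !inE /=.
case xy: (x != y); last by rewrite !andbF.
case gxy: (g x y); first by rewrite !andbF.
have xu : x != u.
  apply/eqP => E; move: gxy; rewrite E Hu //; by rewrite E eq_sym in xy.
have yu : y != u.
  apply/eqP => E; move: gxy; rewrite E sym Hu //; by rewrite E in xy.
rewrite xu yu /=; congr phi.
rewrite /prof /cC /cA !sep_setC1 !cardsD1'.
have h1 : u \in [set z in setT | g x z && g y z] by rewrite !inE (sym x u) (sym y u) !Hu.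
have h2 : (u \in [set z in setT | g x z && ~~ g y z]) = false.
  by rewrite !inE (sym y u) !Hu // andbF.
have h3 : (u \in [set z in setT | g y z && ~~ g x z]) = false.
  by rewrite !inE (sym x u) !Hu // andbF.
rewrite h1 h2 h3 !subn0.
have : 0 < #|[set z in setT | g x z && g y z]| by apply/card_gt0P; exists u.
by case: #|_| => [|k] //= _; rewrite subn1.
Qed.

Lemma PW_le (T : finType) (r : rel T) W (phi1 phi2 : nat * nat * nat -> bool) :
  (forall q, phi1 q -> phi2 q) -> PW r W phi1 <= PW r W phi2.
Proof.
move=> H; apply: subset_leq_card; apply/subsetP => u; rewrite !inE.
by case/andP => -> /H.
Qed.

Lemma PW_eq (T : finType) (r : rel T) W (phi1 phi2 : nat * nat * nat -> bool) :
  (forall q, phi1 q = phi2 q) -> PW r W phi1 = PW r W phi2.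
Proof. by move=> H; apply: eq_card => u; rewrite !inE H. Qed.

Lemma PW_or (T : finType) (r : rel T) W (phi1 phi2 : nat * nat * nat -> bool) :
  (forall q, ~~ (phi1 q && phi2 q)) ->
  PW r W (fun q => phi1 q || phi2 q) = PW r W phi1 + PW r W phi2.
Proof.
move=> H; rewrite !PW_sum -big_split; apply: eq_bigr => u _ /=.
move: (H (prof r W u.1 u.2)).
by case: (valid r W u); case: (phi1 _); case: (phi2 _).
Qed.

Lemma dom_ge2 n (g : rel 'I_n) (v0 : 'I_n) :
  (forall u, exists z, (z != u) && ~~ g u z) ->
  forall D, dominating g D -> 2 <= #|D|.
Proof.
move=> Hnu D HD; rewrite leqNgt; apply/negP => lt2.
have : (#|D| == 0) || (#|D| == 1) by case: #|D| lt2 => [|[|]].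
case/orP.
  move/eqP/cards0_eq => D0; move/forallP: HD => /(_ v0).
  rewrite D0 inE /=; case/existsP => w; by rewrite inE.
case/cards1P => u Du; case: (Hnu u) => z /andP[zu nguz].
move/forallP: HD => /(_ z); rewrite Du inE (negbTE zu) /=.
case/existsP => w /andP[]; rewrite inE => /eqP ->; by rewrite (negbTE nguz).
Qed.

Lemma dom_num_ge2 n (g : rel 'I_n) (v0 : 'I_n) :
  2 <= n -> (forall u, exists z, (z != u) && ~~ g u z) -> 2 <= domination_number g.
Proof.
move=> n2 Hnu; rewrite /domination_number.
apply: (big_ind (fun m => 2 <= m)) => //.
  by move=> a b Ha Hb; rewrite leq_min Ha Hb.
by move=> D HD; apply: (dom_ge2 v0 Hnu).
Qed.

Lemma bigmin_le_seq (I : eqType) (r : seq I) (P : pred I) (F : I -> nat) x0 j :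
  j \in r -> P j -> \big[minn/x0]_(i <- r | P i) F i <= F j.
Proof.
elim: r => [|a r IH] //; rewrite inE big_cons => /orP [/eqP -> ->|jr Pj].
  exact: geq_minl.
case: (P a); last exact: IH.
exact: leq_trans (geq_minr _ _) (IH jr Pj).
Qed.

Lemma dom_num_le n (g : rel 'I_n) D : dominating g D -> domination_number g <= #|D|.
Proof.
move=> HD; rewrite /domination_number.
by apply: bigmin_le_seq => //; rewrite mem_index_enum.
Qed.

Lemma top_zero n (g : rel 'I_n) : 2 <= n -> simple_graph g ->
  (forall u, exists z, (z != u) && ~~ g u z) -> domination_number g <> 2 ->
  PW g setT (tot (n - 2)) = 0.
Proof.
move=> n2 sg Hnu Hd.
have n0 : 0 < n by lia.
pose v0 := Ordinal n0.
rewrite PW_sum big1 // => [[x y]] _; rewrite /valid /tot /prof /=.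
case xy: (x != y); last by rewrite !andbF.
case gxy: (g x y); first by rewrite !andbF.
rewrite !inE /=.
case: eqP => // Htot; exfalso.
have [HC HA HB] := pair_hyps sg gxy.
have := part_card xy HC HA HB; rewrite card_ord => Hc.
set R := [set v | [&& v != x, v != y, v \notin _, v \notin _ & v \notin _]] in Hc.
have R0 : #|R| = 0 by rewrite /cC /cA in Htot; lia.
have Hdom : dominating g [set x; y].
  apply/forallP => v; rewrite !inE.
  case: (eqVneq v x) => [->|vx] //=; case: (eqVneq v y) => [->|vy] //=.
  have : v \notin R by rewrite (cards0_eq R0) inE.
  rewrite !inE vx vy /=.
  case gxv: (g x v).
    by move=> _; apply/existsP; exists x; rewrite !inE eqxx gxv.
  case gyv: (g y v) => //=.
  by move=> _; apply/existsP; exists y; rewrite !inE eqxx gyv orbT.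
have := dom_num_le Hdom; rewrite cards2 xy.
have := dom_num_ge2 v0 n2 Hnu.
lia.
Qed.

Lemma set2_inj n (x y x' y' : 'I_n) : x < y -> x' < y' ->
  [set x; y] = [set x'; y'] -> x = x' /\ y = y'.
Proof.
move=> l1 l2 E.
have hx : x \in [set x'; y'] by rewrite -E set21.
have hy : y \in [set x'; y'] by rewrite -E set22.
have hx' : x' \in [set x; y] by rewrite E set21.
have hy' : y' \in [set x; y] by rewrite E set22.
move: hx hy hx' hy'; rewrite !inE.
case/orP => /eqP e1; case/orP => /eqP e2; case/orP => /eqP e3; case/orP => /eqP e4;
  subst => //; lia.
Qed.

Lemma two_one n (S : {set 'I_n * 'I_n}) :
  (forall x y, ((x, y) \in S) = ((y, x) \in S)) ->
  (forall x y, (x, y) \in S -> x != y) ->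
  #|[set P : {set 'I_n} | [exists x, exists y, (P == [set x; y]) && ((x, y) \in S)]]| * 2
  = #|S|.
Proof.
move=> HS Hn.
set S1 := [set u in S | u.1 < u.2].
have c1 : #|[set P : {set 'I_n} | [exists x, exists y, (P == [set x; y]) && ((x, y) \in S)]]|
          = #|S1|.
  have -> : [set P : {set 'I_n} | [exists x, exists y, (P == [set x; y]) && ((x, y) \in S)]]
      = (fun u => [set u.1; u.2]) @: S1.
    apply/setP => P; rewrite inE; apply/existsP/imsetP.
    - case=> x /existsP [y /andP [/eqP -> Sxy]].
      case: (ltngtP x y) => [lt|gt|eq].
      + by exists (x, y) => //; rewrite inE Sxy lt.
      + by exists (y, x); [rewrite inE -HS Sxy gt | rewrite /= setUC].
      + by move: (Hn _ _ Sxy); rewrite (val_inj eq) eqxx.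
    - case=> [[x y]]; rewrite inE => /andP [Sxy lt] ->.
      by exists x; apply/existsP; exists y; rewrite eqxx Sxy.
  rewrite card_in_imset // => [[x y] [x' y']]; rewrite !inE /= => /andP[_ l1] /andP[_ l2] E.
  by case: (set2_inj l1 l2 E) => -> ->.
have c2 : #|S| = #|S1| + #|S1|.
  rewrite -(cardsID [set u : 'I_n * 'I_n | u.1 < u.2] S).
  congr (_ + _).
    by apply: eq_card => u; rewrite !inE andbC.
  have -> : S :\: [set u : 'I_n * 'I_n | u.1 < u.2] = (fun u => (u.2, u.1)) @: S1.
    apply/setP => [[x y]]; rewrite !inE /=; apply/idP/imsetP.
    - case/andP => nlt Sxy; exists (y, x); rewrite // inE /= -HS Sxy /=.
      move: (Hn _ _ Sxy) nlt; rewrite neq_ltn => /orP[->//|->//].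
    - case=> [[a b]]; rewrite inE /= => /andP [Sab lt] [-> ->].
      by rewrite -HS Sab andbT -leqNgt ltnW.
  by rewrite card_imset // => [[a b] [c d]] [-> ->].
lia.
Qed.

Definition phidv k1 k2 k3 (q : nat * nat * nat) := (q == (k1, k2, k3)) || (q == (k1, k3, k2)).

Lemma dv_PW n (g : rel 'I_n) k1 k2 k3 : symmetric g ->
  dv g k1 k2 k3 * 2 = PW g setT (phidv k1 k2 k3).
Proof.
move=> sym; rewrite /PW -two_one.
- congr (_ * 2); apply: eq_card => P; rewrite !inE.
  apply: eq_existsb => x; apply: eq_existsb => y.
  rewrite inE /valid /= !inE /= /dv_pair /phidv /prof /cC /cA.
  have E : forall p : pred 'I_n, [set z in setT | p z] = [set z | p z].
    by move=> p; apply/setP => z; rewrite !inE.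
  rewrite !E !xpair_eqE.
  by case: (P == _); case: (x != y); case: (g x y); rewrite //= !andbA.
- move=> x y; rewrite !inE /valid /= eq_sym (sym x y).
  have Hc : cC g setT y x = cC g setT x y.
    by rewrite /cC; apply: eq_card => z; rewrite !inE /= andbC.
  rewrite /prof ?Hc /phidv ?xpair_eqE !in_setT /=.
  case: (cC g setT x y == k1); case: (cA g setT x y == k2); case: (cA g setT x y == k3);
  case: (cA g setT y x == k2); case: (cA g setT y x == k3); by rewrite ?andbF.
- by move=> x y; rewrite !inE /valid /= => /andP [/and4P [_ _ -> _] _].
Qed.

Theorem theorem15 (n : nat) (g : rel 'I_n) :
  12 <= n ->
  simple_graph g ->
  connected_graph g ->
  domination_number g <> 2 ->
  forall h : rel 'I_n, simple_graph h -> same_deck g h ->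
    (forall k1 k2 k3 : nat, k1 + k2 + k3 <= n - 3 ->
       dv h k1 k2 k3 = dv g k1 k2 k3) /\
    (forall k1 k : nat, k1 + 2 * k <= n - 3 ->
       dv h k1 k k = dv g k1 k k).
Proof.
move=> n12 sg cg Hd h sh [s [bs Hs]].
have n3 : 3 <= n by lia.
have n2 : 2 <= n by lia.
have K : forall phi, \sum_v PW g [set~ v] phi = \sum_v PW h [set~ v] phi.
  by apply: kelly_PW; exists s.
have Hcard : forall v phi, PW g [set~ v] phi = PW h [set~ s v] phi.
  by move=> v; apply: cards_iso_PW (Hs v).
have Hdeg := deg_match n3 sg sh bs Hs.
have Main : forall p1 p2 p3, p1 + p2 + p3 <= n - 2 ->
    PW g setT (pred1 (p1, p2, p3)) = PW h setT (pred1 (p1, p2, p3)).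
  case: (boolP [exists u, [forall z, (z != u) ==> g u z]]).
  - case/existsP => u /forallP Hu.
    have Hu' : forall z, z != u -> g u z by move=> z; move/implyP: (Hu z).
    have degu : deg g u = n.-1.
      have -> : deg g u = #|[set~ u]|.
        apply: eq_card => z; rewrite !inE.
        case: (eqVneq z u) => [->|zu]; first by case: sg => irr _; rewrite irr.
        by rewrite Hu'.
      by rewrite cardsC1 card_ord.
    have Hw : forall z, z != s u -> h (s u) z.
      have Eh : [set z | h (s u) z] = [set~ s u].
        apply/eqP; rewrite eqEcard cardsC1 card_ord -/(deg h (s u)) -Hdeg degu leqnn andbT.
        apply/subsetP => z; rewrite !inE; apply: contraTneq => ->.
        by case: sh => irr _; rewrite irr.
      move=> z zs; have : z \in [set~ s u] by rewrite !inE.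
      by rewrite -Eh inE.
    move=> p1 p2 p3 _.
    rewrite (PW_univ _ sg Hu') (PW_univ _ sh Hw); apply: Hcard.
  - move=> Hnu.
    have Hnu' : forall u, exists z, (z != u) && ~~ g u z.
      move=> u; rewrite negb_exists in Hnu; move/forallP: Hnu => /(_ u).
      by rewrite negb_forall => /existsP [z]; rewrite negb_imply => H; exists z.
    have Hdg : forall v, 0 < deg g v := conn_deg n2 cg.
    have Hdh : forall v, 0 < deg h v.
      by move=> v; case: bs => si K1 K2; rewrite -(K2 v) -Hdeg; apply: Hdg.
    have HA : forall t, PW g setT (tot t) = PW h setT (tot t).
      elim => [|t IH]; first by rewrite !A0.
      have := K (tot t); rewrite !kelly_A // IH => E.
      apply/eqP; rewrite -(eqn_pmul2l (ltn0Sn t)); apply/eqP; lia.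
    have topg : PW g setT (tot (n - 2)) = 0 := top_zero n2 sg Hnu' Hd.
    have toph : PW h setT (tot (n - 2)) = 0 by rewrite -HA.
    suff H : forall m p1 p2 p3, p1 + p2 + p3 + m = n - 2 ->
        PW g setT (pred1 (p1, p2, p3)) = PW h setT (pred1 (p1, p2, p3)).
      by move=> p1 p2 p3 Hp; apply: (H (n - 2 - (p1 + p2 + p3))); lia.
    elim => [|m IH] p1 p2 p3 Hm.
      have Hle : forall r : rel 'I_n, PW r setT (tot (n - 2)) = 0 ->
          PW r setT (pred1 (p1, p2, p3)) = 0.
        move=> r H0; apply/eqP; rewrite -leqn0 -H0; apply: PW_le => q /eqP ->.
        by rewrite /tot /=; apply/eqP; lia.
      by rewrite (Hle _ topg) (Hle _ toph).
    have e1 := IH p1.+1 p2 p3 ltac:(lia).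
    have e2 := IH p1 p2.+1 p3 ltac:(lia).
    have e3 := IH p1 p2 p3.+1 ltac:(lia).
    have := K (pred1 (p1, p2, p3)); rewrite !kelly_O // e1 e2 e3 => E.
    have Hpos : 0 < n - 2 - p1 - p2 - p3 by lia.
    move/eqP: E; rewrite eqn_add2l => E.
    by apply/eqP; rewrite -(eqn_pmul2l Hpos).
have P1 : forall k1 k2 k3 : nat, k1 + k2 + k3 <= n - 3 -> dv h k1 k2 k3 = dv g k1 k2 k3.
  move=> k1 k2 k3 Hk.
  apply/eqP; rewrite -(@eqn_pmul2r 2) //; apply/eqP.
  have symg : symmetric g by case: sg.
  have symh : symmetric h by case: sh.
  rewrite (dv_PW _ _ _ symg) (dv_PW _ _ _ symh).
  case: (eqVneq k2 k3) Hk => [<-|ne] Hk.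
    have Eq : forall q, phidv k1 k2 k2 q = pred1 (k1, k2, k2) q.
      by move=> q; rewrite /phidv orbb.
    rewrite !(PW_eq _ _ Eq) Main //; lia.
  have Hdisj : forall q, ~~ (pred1 (k1, k2, k3) q && pred1 (k1, k3, k2) q).
    move=> q /=; apply/negP => /andP [/eqP -> /eqP].
    by case=> E _; rewrite E eqxx in ne.
  rewrite !(PW_or _ _ Hdisj) -!/(phidv _ _ _).
  by rewrite !Main //; lia.
split => // k1 k Hk; apply: P1; lia.
Qed.
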